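(* Let $E$ be a real vector space and $F$ a non-degenerate real vector space. Let $r\ge 1$ and let $A,B:E^r\to F$ be symmetric $r$-linear maps. If the function $f_A-f_B:E\to F$ is constant on some subset $U\subseteq E$ with $\mathrm{Star}^r(U,E)\neq\emptyset$, then $A=B$.
   Context: No topology is assumed on $E$ or $F$, and $A,B$ need not be continuous. For a symmetric $r$-linear map $A:E^r\to F$, its monomial function is $f_A:E\to F$, $f_A(x)=A(x,x,\dots,x)$. A real vector space $F$ is called non-degenerate if for every nonzero $v\in F$ there is a linear functional $\lambda:F\to\mathbb R$ with $\lambda(v)\neq 0$. For $U\subseteq E$, $\mathrm{Star}(U,E)$ is the set of $v\in U$ such that for every $w\in E$ there is $\delta_w>0$ with $v+tw\in U$ whenever $|t|\le\delta_w$. Set $\mathrm{Star}^1(U,E)=\mathrm{Star}(U,E)$ and $\mathrm{Star}^r(U,E)=\mathrm{Star}^{r-1}(\mathrm{Star}(U,E),E)$. *)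

(* Defs.v *)
From HB Require Import structures.
From mathcomp Require Import all_boot all_order all_fingroup all_algebra.
From mathcomp Require Import classical_sets reals.
Set Implicit Arguments. Unset Strict Implicit. Unset Printing Implicit Defensive.
Import Order.TTheory GRing.Theory Num.Theory.
Local Open Scope ring_scope.
Local Open Scope classical_set_scope.

Definition upd (E : Type) (r : nat) (v : 'I_r -> E) (i : 'I_r) (x : E) : 'I_r -> E :=
  fun j => if j == i then x else v j.

Definition multilinear (R : realType) (E F : lmodType R) (r : nat)
  (A : ('I_r -> E) -> F) : Prop :=
  forall (i : 'I_r) (v : 'I_r -> E) (a : R) (x y : E),
    A (upd v i (a *: x + y)) = a *: A (upd v i x) + A (upd v i y).

Definition symmetric_map (E F : Type) (r : nat) (A : ('I_r -> E) -> F) : Prop :=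
  forall (s : 'S_r) (v : 'I_r -> E), A (fun j => v (s j)) = A v.

Definition monomial (E F : Type) (r : nat) (A : ('I_r -> E) -> F) : E -> F :=
  fun x => A (fun _ => x).

Definition lin_functional (R : realType) (F : lmodType R) (lam : F -> R) : Prop :=
  forall (a : R) (x y : F), lam (a *: x + y) = a * lam x + lam y.

Definition nondegenerate_space (R : realType) (F : lmodType R) : Prop :=
  forall v : F, v != 0 -> exists lam : F -> R, lin_functional lam /\ lam v != 0.

Definition Star (R : realType) (E : lmodType R) (U : set E) : set E :=
  [set v | U v /\ forall w : E, exists2 d : R, 0 < d &
            forall t : R, `|t| <= d -> U (v + t *: w)].

Definition StarN (R : realType) (E : lmodType R) (r : nat) (U : set E) : set E :=
  iter r (@Star R E) U.

(* Main.v *)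
Require Import Defs.
From HB Require Import structures.
From mathcomp Require Import all_boot all_order all_fingroup all_algebra.
From mathcomp Require Import classical_sets reals.
From mathcomp Require Import boolp.
From mathcomp Require Import lra.
Import Order.TTheory GRing.Theory Num.Theory.
Local Open Scope ring_scope.
Local Open Scope classical_set_scope.

Lemma poly_const_coef1 (R : realType) (p : {poly R}) (d : R) : 0 < d ->
  (forall t, `|t| <= d -> p.[t] = p`_0) -> p`_1 = 0.
Proof.
move=> d0 H.
set q := p - (p`_0)%:P.
have q0 : q = 0.
  apply: (@roots_geq_poly_eq0 _ q [seq d / (i.+1)%:R | i <- iota 0 (size q)]).
  - apply/allP => t /mapP [i _ ->]. rewrite /root /q hornerD hornerN hornerC H ?subrr //.
    have n1 : (1 : R) <= i.+1%:R by rewrite ler1n.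
    rewrite ger0_norm; last by rewrite divr_ge0 // ltW.
    rewrite ler_pdivrMr; last by rewrite ltr0Sn.
    nra.
  - rewrite map_inj_uniq ?iota_uniq // => i j.
    move/(mulfI (lt0r_neq0 d0))/invr_inj/eqP. rewrite eqr_nat. by move/eqP=> [].
  - by rewrite size_map size_iota.
have := congr1 (fun q : {poly R} => q`_1) q0.
by rewrite /q coefB coefC /= subr0 coef0.
Qed.

Section Expand.
Variables (R : realType) (E : lmodType R) (r : nat) (L : ('I_r -> E) -> R).
Hypothesis HL : forall (i : 'I_r) (v : 'I_r -> E) (a : R) (x y : E),
    L (upd v i (a *: x + y)) = a * L (upd v i x) + L (upd v i y).

Lemma poly_expand (b : 'I_r -> E) (s : seq 'I_r) : uniq s -> forall a,
  exists p : {poly R}, (forall t, p.[t] = L (fun i => if i \in s then a i + t *: b i else a i))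
    /\ p`_0 = L a /\ p`_1 = \sum_(i <- s) L (upd a i (b i)).
Proof.
elim: s => [|j s IH] /= => [_ a|/andP [js us] a].
  exists (L a)%:P; split; [|split].
  - by move=> t; rewrite hornerC.
  - by rewrite coefC.
  - by rewrite coefC big_nil.
have [p0 [H0 [H00 H01]]] := IH us a.
have [q [Q0 [Q00 Q01]]] := IH us (upd a j (b j)).
exists (p0 + 'X * q); split; [|split].
- move=> t. rewrite hornerD hornerM hornerX H0 Q0.
  set V := (fun i => if i \in s then a i + t *: b i else a i).
  have -> : (fun i => if i \in j :: s then a i + t *: b i else a i)
          = upd V j (t *: b j + a j).
    apply/funext => i; rewrite /upd /V in_cons; case: (eqVneq i j) => [->|//].
    by rewrite addrC.
  rewrite HL addrC; congr (_ * _ + _).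
  - congr L; apply/funext => i; rewrite /upd /V; case: (eqVneq i j) => [->|ij].
      by rewrite (negbTE js).
    by [].
  - congr L; apply/funext => i; rewrite /upd /V; case: (eqVneq i j) => [->|//].
    by rewrite (negbTE js).
- by rewrite coefD coefXM /= H00 addr0.
- by rewrite coefD coefXM /= H01 Q00 big_cons addrC.
Qed.

End Expand.

Lemma sum_if_count (R : realType) (I : eqType) (s : seq I) (P : pred I) (T : R) :
  \sum_(i <- s) (if P i then T else 0) = T *+ count P s.
Proof.
elim: s => [|x s IH]; first by rewrite big_nil.
by rewrite big_cons IH /=; case: (P x); rewrite ?add0r // mulrS.
Qed.

Theorem mainTheorem1 (R : realType) (E F : lmodType R) (r : nat)
  (A B : ('I_r -> E) -> F) (U : set E) :
  nondegenerate_space F -> (0 < r)%N ->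
  multilinear A -> symmetric_map A ->
  multilinear B -> symmetric_map B ->
  (exists c : F, forall x, U x -> monomial A x - monomial B x = c) ->
  StarN r U !=set0 ->
  A = B.
Proof.
move=> ND r0 mA sA mB sB [c Hc] [x0 Hx0].
apply/funext => v; case: (eqVneq (A v - B v) 0) => [/eqP|/ND [lam [Hlam Hv]]]; first by rewrite subr_eq0 => /eqP.
exfalso.
set L := fun w => lam (A w - B w).
have HL : forall (i : 'I_r) (v : 'I_r -> E) (a : R) (x y : E),
    L (upd v i (a *: x + y)) = a * L (upd v i x) + L (upd v i y).
  move=> i w a x y; rewrite /L mA mB -Hlam; congr lam.
  by rewrite scalerBr addrACA opprD.
have HS : forall (s : 'S_r) (w : 'I_r -> E), L (fun j => w (s j)) = L w.
  by move=> s w; rewrite /L sA sB.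
have L0 : forall i w, L (upd w i 0) = 0.
  move=> i w; have := HL i w 1 0 0; rewrite scaler0 add0r mul1r; lra.
suff Q : forall k, (k <= r)%N -> forall x, StarN k U x -> forall w : 'I_r -> E,
    L (fun i => if (i < k)%N then w i else x) = (if k == 0%N then lam c else 0).
  move/negP: Hv; apply; apply/eqP.
  have := Q r (leqnn r) x0 Hx0 v.
  rewrite (negbTE (lt0n_neq0 r0)) => <-; congr L; apply/funext => i.
  by rewrite ltn_ord.
elim=> [_ x Ux w|k IH kr x [Sx Hx] w].
  by rewrite /L /=; rewrite Hc.
have kr' : (k < r)%N by [].
set kk := Ordinal kr'.
set wk := w kk.
have [d d0 Hd] := Hx wk.
set a := fun i : 'I_r => if (i < k)%N then w i else x.
set b := fun i : 'I_r => if (i < k)%N then 0 else wk.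
have [p [Hp [Hp0 Hp1]]] := @poly_expand _ _ _ L HL b _ (index_enum_uniq 'I_r) a.
have Hpt : forall t, `|t| <= d -> p.[t] = (if k == 0%N then lam c else 0).
  move=> t td; rewrite Hp -(IH (ltnW kr) _ (Hd t td) w); congr L.
  apply/funext => i; rewrite mem_index_enum /a /b; case: (i < k)%N => //.
  by rewrite scaler0 addr0.
have c1 : p`_1 = 0.
  apply: (@poly_const_coef1 _ p d d0) => t td.
  rewrite Hpt // -horner_coef0 Hpt // normr0 ltW //.
set T := L (fun i => if (i < k.+1)%N then w i else x).
have : \sum_(i < r) (if (k <= i)%N then T else 0) = 0.
  rewrite -[RHS]c1 Hp1; apply: eq_bigr => i _.
  rewrite /b; case: (leqP k i) => ki; last by rewrite L0.
  rewrite -(HS (tperm kk i)) /T; congr L; apply/funext => j.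
  case: tpermP.
  - by move=> ->; rewrite /upd /= eqxx ltnSn.
  - move=> ->; rewrite /upd /a /=; case: (eqVneq kk i) => [<-|ki'].
      by rewrite /= ltnSn.
    have ki2 : (k < i)%N.
      rewrite ltn_neqAle ki andbT; apply: contra ki' => /eqP e; apply/eqP/val_inj.
      by rewrite /= e.
    by rewrite ltnn ltnS leqNgt ki2.
  - move=> jk ji; rewrite /upd /= (introF eqP ji) /a ltnS leq_eqVlt.
    have -> : (j == k :> nat) = false.
      by apply/negbTE; apply/eqP => e; apply: jk; apply/val_inj.
    by [].
rewrite sum_if_count => /eqP; rewrite mulrn_eq0 => /orP [|/eqP //].
rewrite -leqn0 leqNgt -has_count => /negP H; exfalso; apply: H.
apply/hasP; exists kk; first exact: mem_index_enum.
by rewrite /= leqnn.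
Qed.
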